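(* Let $n\ge 3$, $R>0$, let $P$ be a nonnegative $C^1$ function on $(0,R)$ such that the equation $y''+\frac1r y'+P(r)y=0$ has a positive solution on $(0,R)$, and let $0\le\lambda\le n-2$. Then the pair $$\Big(r^{-\lambda},\ \Big(\frac{n-\lambda-2}{2}\Big)^2r^{-\lambda-2}+r^{-\lambda}P(r)\Big)$$ is an $n$-dimensional Bessel pair on $(0,R)$.
   Context: A pair $(V,W)$ of positive functions on $(0,R)$ is called an $n$-dimensional Bessel pair on $(0,R)$ if the equation $y''(r)+\big(\frac{n-1}{r}+\frac{V_r(r)}{V(r)}\big)y'(r)+\frac{W(r)}{V(r)}y(r)=0$ has a positive solution on $(0,R)$, where $V_r$ denotes the derivative of $V$. *)

(* Defs.v *)
From Stdlib Require Import Reals Lra.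
Open Scope R_scope.

Definition positive_solution_on (Rr : R) (a b : R -> R) : Prop :=
  exists y y1 y2 : R -> R,
    forall r, 0 < r < Rr ->
      derivable_pt_lim y r (y1 r) /\
      derivable_pt_lim y1 r (y2 r) /\
      0 < y r /\
      y2 r + a r * y1 r + b r * y r = 0.

Definition bessel_pair (n : nat) (Rr : R) (V W : R -> R) : Prop :=
  (forall r, 0 < r < Rr -> 0 < V r /\ 0 <= W r) /\
  exists Vr : R -> R,
    (forall r, 0 < r < Rr -> derivable_pt_lim V r (Vr r)) /\
    positive_solution_on Rr
      (fun r => (INR n - 1) / r + Vr r / V r)
      (fun r => W r / V r).

Definition C1_on (Rr : R) (P : R -> R) : Prop :=
  exists P' : R -> R,
    (forall r, 0 < r < Rr -> derivable_pt_lim P r (P' r)) /\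
    (forall r, 0 < r < Rr -> continuity_pt P' r).

(* Main.v *)
Require Import Defs.
From Stdlib Require Import Reals Lra.
Open Scope R_scope.

Lemma Rp_pos r c : 0 < Rpower r c.
Proof. unfold Rpower; apply exp_pos. Qed.

Lemma Rp_m1 r c : 0 < r -> Rpower r (c - 1) = Rpower r c / r.
Proof.
  intros Hr. replace (Rpower r c) with (Rpower r ((c - 1) + 1)) by (f_equal; ring).
  rewrite Rpower_plus, Rpower_1 by exact Hr. field. lra.
Qed.

Lemma der_prod c g g' r : 0 < r -> derivable_pt_lim g r g' ->
  derivable_pt_lim (fun x => Rpower x c * g x) r
    (c * (Rpower r (c - 1) * g r) + Rpower r c * g').
Proof.
  intros Hr Hg. rewrite <- Rmult_assoc.
  exact (derivable_pt_lim_mult (fun x => Rpower x c) g r _ _ (derivable_pt_lim_power r c Hr) Hg).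
Qed.

Lemma der_lin a f g f' g' r : derivable_pt_lim f r f' -> derivable_pt_lim g r g' ->
  derivable_pt_lim (fun x => a * f x + g x) r (a * f' + g').
Proof.
  intros Hf Hg.
  exact (derivable_pt_lim_plus (mult_real_fct a f) g r _ _ (derivable_pt_lim_scal f a r f' Hf) Hg).
Qed.

Theorem mainTheorem3 (n : nat) (Rr : R) (P : R -> R) (lambda : R) :
  (3 <= n)%nat ->
  0 < Rr ->
  C1_on Rr P ->
  (forall r, 0 < r < Rr -> 0 <= P r) ->
  positive_solution_on Rr (fun r => 1 / r) P ->
  0 <= lambda <= INR n - 2 ->
  bessel_pair n Rr
    (fun r => Rpower r (- lambda))
    (fun r => ((INR n - lambda - 2) / 2) ^ 2 * Rpower r (- lambda - 2)
              + Rpower r (- lambda) * P r).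
Proof.
  intros Hn HR _ HP [y [y1 [y2 Hy]]] Hl.
  set (a := (INR n - lambda - 2) / 2).
  split.
  { intros r Hr. split. apply Rp_pos.
    pose proof (HP r Hr). pose proof (Rp_pos r (-lambda)). pose proof (Rp_pos r (-lambda-2)).
    assert (0 <= a ^ 2) by (apply pow2_ge_0).
    assert (0 <= a ^ 2 * Rpower r (-lambda-2)) by (apply Rmult_le_pos; lra).
    assert (0 <= Rpower r (-lambda) * P r) by (apply Rmult_le_pos; lra). lra. }
  exists (fun r => - lambda * Rpower r (- lambda - 1)).
  split.
  { intros r Hr. apply derivable_pt_lim_power. lra. }
  exists (fun r => Rpower r (-a) * y r),
         (fun r => (-a) * (Rpower r (-a - 1) * y r) + Rpower r (-a) * y1 r),
         (fun r => (-a) * ((-a-1) * (Rpower r (-a-1-1) * y r) + Rpower r (-a-1) * y1 r)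
                   + ((-a) * (Rpower r (-a - 1) * y1 r) + Rpower r (-a) * y2 r)).
  intros r Hr. destruct (Hy r Hr) as [D1 [D2 [Hpos E]]].
  assert (r0 : 0 < r) by lra.
  split; [|split; [|split]].
  - exact (der_prod (-a) y (y1 r) r r0 D1).
  - apply der_lin; apply der_prod; assumption.
  - apply Rmult_lt_0_compat; [apply Rp_pos|exact Hpos].
  - rewrite !Rp_m1 by exact r0.
    replace (-lambda - 2) with ((-lambda - 1) - 1) by ring.
    rewrite !Rp_m1 by exact r0.
    assert (Ha : INR n = 2 * a + lambda + 2) by (unfold a; field).
    rewrite Ha.
    assert (E' : y2 r = - (1 / r) * y1 r - P r * y r) by lra.
    rewrite E'.
    pose proof (Rp_pos r (-a)). pose proof (Rp_pos r (-lambda)).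
    field. repeat split; lra.
Qed.
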